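(* Let $F(x,\theta,\xi)$ be a model with parameter blocks $\theta=(\theta_0,\dots,\theta_L)$ and $\xi=(\xi_0,\dots,\xi_{L-1})$ such that $F(x,\theta,\xi)\in\{-1,+1\}$ for all $x\in\mathcal{X}$. Suppose there exist $a_0,\dots,a_L,b_0,\dots,b_{L-1}>0$ such that whenever $\|\hat\theta_i-\theta_i\|_2\le a_i$ for all $i$ and $\|\hat\xi_i-\xi_i\|_2\le b_i$ for all $i$, we have $|F(x,\theta,\xi)-F(x,\hat\theta,\hat\xi)|<1$ for all $x\in\mathcal{X}$. Then for all $x\in\mathcal{X}$, $m_F((\theta,\xi),x,\mathbf{1}(F(x,\theta,\xi)\ge0))\ge\min\{a_0,\dots,a_L,b_0,\dots,b_{L-1}\}$. The same lower bound holds for $m_{F'}(\theta',x,\mathbf{1}(F'(x,\theta')\ge0))$ for any layer-based weight-shared model $F'(x,\theta')=F(x,\tau^{(1)}(\theta'),\tau^{(2)}(\theta'))$ with $\tau^{(1)}(\theta')=\theta$, $\tau^{(2)}(\theta')=\xi$.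
   Context: All-layer margin of an architecture $F$ with parameter vector $\vartheta$: $m_F(\vartheta,x,y)=\min\{\|\delta\|_2:(y-0.5)F(x,\vartheta+\delta)\le0\}$ for $y\in\{0,1\}$. Layer-based weight sharing: $\theta'\in\mathbb{R}^{d'}$, and each component map $\tau^{(1)}_i$ (producing $\theta_i$) and $\tau^{(2)}_i$ (producing $\xi_i$) has the form $\theta'\mapsto(\theta'_{\pi_1},\dots,\theta'_{\pi_{b}})$ for distinct indices $\pi_1,\dots,\pi_b\in[d']$ (no coordinate of $\theta'$ is duplicated within one layer). *)

(* Defs.v *)
From HB Require Import structures.
From mathcomp Require Import all_boot all_order all_algebra.
From mathcomp Require Import all_classical all_reals ereal.
Set Implicit Arguments. Unset Strict Implicit. Unset Printing Implicit Defensive.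
Import Order.TTheory GRing.Theory Num.Theory.
Local Open Scope ring_scope.
Local Open Scope classical_set_scope.

Definition l2norm (R : realType) (n : nat) (v : 'rV[R]_n) : R :=
  Num.sqrt (\sum_(j < n) v ord0 j ^+ 2).

(* All-layer margin of a model G : X -> P -> R at parameter v, for label y,
   where the parameter space P has addition [add] and norm [nrm]:
   m_G(v,x,y) = inf { ||delta|| : (y - 1/2) G(x, v + delta) <= 0 }
   (the "min" of the paper, taken as an infimum in the extended reals,
   = +oo when the set is empty). *)
Definition all_layer_margin (R : realType) (X P : Type)
  (add : P -> P -> P) (nrm : P -> R) (G : X -> P -> R) (v : P) (x : X) (y : R)
  : \bar R :=
  ereal_inf [set (nrm d)%:E | d in [set d | (y - 2^-1) * G x (add v d) <= 0]].

Definition blockparams (R : realType) (L : nat) (p : 'I_L.+1 -> nat)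
  (q : 'I_L -> nat) : Type :=
  ((forall i : 'I_L.+1, 'rV[R]_(p i)) * (forall i : 'I_L, 'rV[R]_(q i)))%type.

Definition bp_add (R : realType) (L : nat) (p : 'I_L.+1 -> nat) (q : 'I_L -> nat)
  (u v : blockparams R p q) : blockparams R p q :=
  (fun i => u.1 i + v.1 i, fun i => u.2 i + v.2 i).

Definition bp_norm (R : realType) (L : nat) (p : 'I_L.+1 -> nat) (q : 'I_L -> nat)
  (u : blockparams R p q) : R :=
  Num.sqrt (\sum_(i < L.+1) \sum_(j < p i) u.1 i ord0 j ^+ 2
          + \sum_(i < L) \sum_(j < q i) u.2 i ord0 j ^+ 2).

(* Layer-based weight sharing: a block map selecting coordinates
   theta' |-> (theta'_{pi 1}, ..., theta'_{pi b}). *)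
Definition select_coords (R : realType) (d b : nat) (pi : 'I_b -> 'I_d)
  (v : 'rV[R]_d) : 'rV[R]_b := \row_(j < b) v ord0 (pi j).

Definition label01 (R : realType) (t : R) : R := if 0 <= t then 1 else 0.

(* Main.v *)
Require Import Defs.
From HB Require Import structures.
From mathcomp Require Import all_boot all_order all_algebra.
From mathcomp Require Import all_classical all_reals ereal.
Import Order.TTheory GRing.Theory Num.Theory.
Local Open Scope ring_scope.


Lemma key_lem (R : realType) (F0 G c n : R) :
  (F0 = 1 \/ F0 = -1) -> (n < c -> `|F0 - G| < 1) ->
  (label01 F0 - 2^-1) * G <= 0 -> c <= n.
Proof.
move=> HF H Hle; rewrite leNgt; apply/negP => /H; rewrite ltr_norml => /andP[h1 h2].
case: HF Hle h1 h2 => -> ; rewrite /label01.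
- rewrite ler01 => Hle h1 h2.
  have : G <= 0.
    have hp : (0 : R) < 1 - 2^-1 by rewrite subr_gt0 invf_lt1 ?ltr1n.
    by rewrite -(pmulr_rle0 _ hp).
  move=> HG; move: h2; rewrite ltrBlDr -ltrBlDl subrr => h; move: (lt_le_trans h HG).
  by rewrite ltxx.
- have -> : ((0:R) <= -1) = false by apply/negbTE; rewrite -ltNge ltrN10.
  move=> Hle h1 h2.
  have : 0 <= G.
    have hn : (0 - 2^-1 : R) < 0 by rewrite sub0r oppr_lt0 invr_gt0 ltr0n.
    by rewrite -(nmulr_rle0 _ hn).
  move=> HG; move: h1; rewrite ltrBrDl -ltrBrDr subrr => h; move: (le_lt_trans HG h).
  by rewrite ltxx.
Qed.

Lemma sum_sub_le (R : realType) (n : nat) (A : {pred 'I_n}) (f : 'I_n -> R) :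
  (forall k, 0 <= f k) -> \sum_(k in A) f k <= \sum_k f k.
Proof.
move=> Hf; rewrite big_mkcond /=; apply: ler_sum => k _.
by case: (k \in A) => //; apply: Hf.
Qed.

Lemma one_le_sum (R : realType) (I : finType) (f : I -> R) (i : I) :
  (forall k, 0 <= f k) -> f i <= \sum_k f k.
Proof.
move=> Hf; rewrite (bigD1 i) //= lerDl; apply: sumr_ge0 => k _; exact: Hf.
Qed.

Lemma select_le (R : realType) (d b : nat) (pi : 'I_b -> 'I_d) (v : 'rV[R]_d) :
  injective pi -> l2norm (select_coords pi v) <= l2norm v.
Proof.
move=> Hinj; rewrite /l2norm /select_coords ler_wsqrtr //.
under eq_bigr => j _ do rewrite mxE.
rewrite -(big_imset (fun k => v ord0 k ^+ 2) (A := predT)) /=; last first.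
  by move=> x y _ _; apply: Hinj.
by apply: sum_sub_le => k; apply: sqr_ge0.
Qed.

Theorem mainTheorem12 (R : realType) (X : Type) (L : nat)
  (p : 'I_L.+1 -> nat) (q : 'I_L -> nat)
  (F : X -> (forall i : 'I_L.+1, 'rV[R]_(p i)) -> (forall i : 'I_L, 'rV[R]_(q i)) -> R)
  (theta : forall i : 'I_L.+1, 'rV[R]_(p i)) (xi : forall i : 'I_L, 'rV[R]_(q i))
  (a : 'I_L.+1 -> R) (b : 'I_L -> R) :
  (forall x, F x theta xi = 1 \/ F x theta xi = -1) ->
  (forall i, 0 < a i) -> (forall i, 0 < b i) ->
  (forall (thetah : forall i : 'I_L.+1, 'rV[R]_(p i))
          (xih : forall i : 'I_L, 'rV[R]_(q i)),
     (forall i, l2norm (thetah i - theta i) <= a i) ->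
     (forall i, l2norm (xih i - xi i) <= b i) ->
     forall x, `|F x theta xi - F x thetah xih| < 1) ->
  let c := Num.min (\big[Num.min/a ord0]_(i < L.+1) a i)
                   (\big[Num.min/a ord0]_(i < L) b i) in
  (forall x : X,
     (c%:E <= all_layer_margin (@bp_add R L p q) (@bp_norm R L p q)
                (fun x (v : blockparams R p q) => F x v.1 v.2)
                (theta, xi) x (label01 (F x theta xi)))%E)
  /\
  (forall (d' : nat) (pi1 : forall i : 'I_L.+1, 'I_(p i) -> 'I_d')
          (pi2 : forall i : 'I_L, 'I_(q i) -> 'I_d') (theta' : 'rV[R]_d'),
     (forall i, injective (pi1 i)) -> (forall i, injective (pi2 i)) ->
     (forall i, select_coords (pi1 i) theta' = theta i) ->
     (forall i, select_coords (pi2 i) theta' = xi i) ->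
     let F' := fun (x : X) (v : 'rV[R]_d') =>
       F x (fun i => select_coords (pi1 i) v) (fun i => select_coords (pi2 i) v) in
     forall x : X,
       (c%:E <= all_layer_margin (fun u v : 'rV[R]_d' => (u + v)%R) (@l2norm R d')
                  F' theta' x (label01 (F' x theta')))%E).
Proof.
move=> Hpm Ha Hb Hcont c.
have cA : forall i, c <= a i.
  by move=> i; rewrite /c ge_min bigmin_le ?orbT.
have cB : forall i, c <= b i.
  by move=> i; rewrite /c ge_min bigmin_le ?orbT.
split.
- move=> x; apply/ereal_infP => _ [d Hd <-]; rewrite lee_fin.
  move: Hd => /= Hd.
    apply: (@key_lem _ _ _ _ _ (Hpm x) _ Hd) => Hn.
  apply: (Hcont (fun i => theta i + d.1 i) (fun i => xi i + d.2 i)).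
  + move=> i; have -> : theta i + d.1 i - theta i = d.1 i by rewrite addrC addKr.
    apply: le_trans _ (cA i); apply: ltW; apply: le_lt_trans _ Hn.
    rewrite /bp_norm /l2norm ler_wsqrtr //.
    apply: (le_trans (y := \sum_(i0 < _) \sum_(j < p i0) d.1 i0 ord0 j ^+ 2)).
      apply: (@one_le_sum _ _ (fun i0 => \sum_(j < p i0) d.1 i0 ord0 j ^+ 2)) => k.
      by apply: sumr_ge0 => j _; apply: sqr_ge0.
    rewrite lerDl.
    by apply: sumr_ge0 => k _; apply: sumr_ge0 => j _; apply: sqr_ge0.
  + move=> i; have -> : xi i + d.2 i - xi i = d.2 i by rewrite addrC addKr.
    apply: le_trans _ (cB i); apply: ltW; apply: le_lt_trans _ Hn.
    rewrite /bp_norm /l2norm ler_wsqrtr //.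
    apply: (le_trans (y := \sum_(i0 < _) \sum_(j < q i0) d.2 i0 ord0 j ^+ 2)).
      apply: (@one_le_sum _ _ (fun i0 => \sum_(j < q i0) d.2 i0 ord0 j ^+ 2)) => k.
      by apply: sumr_ge0 => j _; apply: sqr_ge0.
    rewrite lerDr.
    by apply: sumr_ge0 => k _; apply: sumr_ge0 => j _; apply: sqr_ge0.
- move=> d' pi1 pi2 theta' Hi1 Hi2 Hs1 Hs2 F' x.
  have E1 : (fun i => select_coords (pi1 i) theta') = theta.
    by apply: functional_extensionality_dep => i; apply: Hs1.
  have E2 : (fun i => select_coords (pi2 i) theta') = xi.
    by apply: functional_extensionality_dep => i; apply: Hs2.
  have EF : F' x theta' = F x theta xi by rewrite /F' E1 E2.
  apply/ereal_infP => _ [d Hd <-]; rewrite lee_fin.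
  move: Hd; rewrite /= EF => Hd.
  apply: (@key_lem _ _ _ _ _ (Hpm x) _ Hd) => Hn.
  rewrite /F'.
  apply: Hcont.
  + move=> i; rewrite -Hs1.
    have -> : select_coords (pi1 i) (theta' + d) - select_coords (pi1 i) theta'
              = select_coords (pi1 i) d.
      by apply/rowP => j; rewrite !mxE addrC addKr.
    apply: le_trans _ (cA i); apply: ltW; apply: le_lt_trans _ Hn; exact: select_le.
  + move=> i; rewrite -Hs2.
    have -> : select_coords (pi2 i) (theta' + d) - select_coords (pi2 i) theta'
              = select_coords (pi2 i) d.
      by apply/rowP => j; rewrite !mxE addrC addKr.
    apply: le_trans _ (cB i); apply: ltW; apply: le_lt_trans _ Hn; exact: select_le.
Qed.
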